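(* Let $n\ge2$ and $K\in\mathcal{C}_e^n$. Then $$K=\bigcap_{u\in S^{n-1}}C^{-}(u,c_K(u)).$$ Moreover, for every $x\in\partial K$ there exists $u_0\in S^{n-1}$ with $[x,u_0]=c_K(u_0)$.
   Context: For $x,y\in\mathbb{R}^n$ let $[x,y]=\sqrt{|x|^2|y|^2-(x\cdot y)^2}$. For $u\in S^{n-1}$, $r>0$, $C^{-}(u,r)=\{x\in\mathbb{R}^n:[x,u]\le r\}$ is a closed solid cylinder. $\mathcal{C}_e^n$ is the class of origin-symmetric convex bodies in $\mathbb{R}^n$ that are intersections of closed solid cylinders. For $K\in\mathcal{C}_e^n$, the cylindrical support function is $c_K(x)=\max_{y\in K}[x,y]$, $x\in\mathbb{R}^n$. $\partial K$ denotes the boundary of $K$. *)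

(* Defs.v *)
(* R : realType, points of R^n are row vectors 'rV[R]_n
   with the (product = Euclidean) topology from normedtype. *)
From HB Require Import structures.
From mathcomp Require Import all_boot all_order all_algebra.
From mathcomp Require Import all_classical all_reals all_analysis.
Set Implicit Arguments. Unset Strict Implicit. Unset Printing Implicit Defensive.
Import Order.TTheory GRing.Theory Num.Theory.
Import numFieldNormedType.Exports.
Local Open Scope classical_set_scope.
Local Open Scope ring_scope.

Section Cyl.
Variables (R : realType) (n : nat).

Definition dotv (x y : 'rV[R]_n) : R := \sum_(i < n) x ord0 i * y ord0 i.

Definition sphere : set 'rV[R]_n := [set u | dotv u u = 1].

Definition brk (x y : 'rV[R]_n) : R :=
  Num.sqrt (dotv x x * dotv y y - (dotv x y) ^+ 2).

Definition cylinder (u : 'rV[R]_n) (r : R) : set 'rV[R]_n := [set x | brk x u <= r].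

Definition convex_set_Rn (K : set 'rV[R]_n) : Prop :=
  forall x y (t : R), K x -> K y -> 0 <= t <= 1 -> K (t *: x + (1 - t) *: y).

Definition convex_body (K : set 'rV[R]_n) : Prop :=
  compact K /\ convex_set_Rn K /\ interior K !=set0.

Definition origin_symmetric (K : set 'rV[R]_n) : Prop :=
  forall x, K x -> K (- x).

Definition cyl_intersection (K : set 'rV[R]_n) : Prop :=
  exists I : set ('rV[R]_n * R),
    (forall p, I p -> sphere p.1 /\ 0 < p.2) /\
    K = \bigcap_(p in I) cylinder p.1 p.2.

Definition in_Ce (K : set 'rV[R]_n) : Prop :=
  convex_body K /\ origin_symmetric K /\ cyl_intersection K.

(* cylindrical support function c_K(x) = max_{y in K} [x,y]
   (a supremum, attained since K is compact and nonempty) *)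
Definition cyl_supp (K : set 'rV[R]_n) (x : 'rV[R]_n) : R :=
  sup [set brk x y | y in K].

Definition bdry (K : set 'rV[R]_n) : set 'rV[R]_n := closure K `\` interior K.

End Cyl.

(* Main.v *)
Require Import Defs.
From HB Require Import structures.
From mathcomp Require Import all_boot all_order all_algebra.
From mathcomp Require Import all_classical all_reals all_analysis.
From mathcomp Require Import ring lra.
Import Order.TTheory GRing.Theory Num.Theory.
Import numFieldNormedType.Exports.
Local Open Scope classical_set_scope.
Local Open Scope ring_scope.

Section Aux.
Context (R : realType) (n : nat).
Implicit Types (x y a b e u v : 'rV[R]_n).

Lemma dotvC a b : dotv a b = dotv b a.
Proof. by apply: eq_bigr => i _; rewrite mulrC. Qed.

Lemma dotvDl a e b : dotv (a + e) b = dotv a b + dotv e b.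
Proof. by rewrite /dotv -big_split; apply: eq_bigr => i _; rewrite mxE mulrDl. Qed.

Lemma dotvDD a e : dotv (a + e) (a + e) = dotv a a + 2 * dotv a e + dotv e e.
Proof. rewrite dotvDl (dotvC a) (dotvC e) !dotvDl (dotvC e a); ring. Qed.

Lemma coord_le x i : `|x ord0 i| <= `|x|.
Proof.
rewrite [leRHS]/Num.Def.normr /= mx_normrE; apply/bigmax_geP; right => /=.
by exists (ord0, i).
Qed.

Lemma norm_le_coord x c : 0 <= c -> (forall i, `|x ord0 i| <= c) -> `|x| <= c.
Proof.
move=> c0 H; rewrite /Num.Def.normr /= mx_normrE; apply/bigmax_leP; split=> // -[i j] _ /=.
by rewrite (ord1 i); apply: H.
Qed.

Lemma dotv_bound a b : `|dotv a b| <= n%:R * (`|a| * `|b|).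
Proof.
apply: le_trans (ler_norm_sum _ _ _) _.
apply: le_trans (ler_sum (I := 'I_n) (G := fun _ => `|a| * `|b|) _ _) _.
  by move=> i _; rewrite normrM; apply: ler_pM => //; apply: coord_le.
by rewrite sumr_const card_ord mulr_natl.
Qed.

Lemma dotv_ge0 a : 0 <= dotv a a.
Proof. by apply: sumr_ge0 => i _; rewrite -expr2 sqr_ge0. Qed.

Lemma brkC a b : brk a b = brk b a.
Proof. by rewrite /brk dotvC mulrC. Qed.

Lemma sphere_norm u : sphere u -> `|u| <= 1.
Proof.
rewrite /sphere /= => hu; apply: norm_le_coord => // i.
have : u ord0 i ^+ 2 <= 1.
  rewrite -hu /dotv (bigD1 i) //= expr2 lerDl.
  by apply: sumr_ge0 => j _; rewrite -expr2 sqr_ge0.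
rewrite -(real_normK (num_real _)) => h.
have h0 := normr_ge0 (u ord0 i); nra.
Qed.

Lemma sqrt_le_add (p q t : R) : 0 <= t -> p <= q + t ->
  Num.sqrt p <= Num.sqrt q + Num.sqrt t.
Proof.
move=> t0 pqt.
have [p0|p0] := lerP p 0.
  by rewrite ler0_sqrtr // addr_ge0 ?sqrtr_ge0.
apply: le_trans (ler_wsqrtr pqt) _.
have [q0|q0] := lerP q 0.
  rewrite (ler0_sqrtr q0) add0r.
  by apply: ler_wsqrtr; lra.
have s0 : 0 <= Num.sqrt q + Num.sqrt t by rewrite addr_ge0 ?sqrtr_ge0.
rewrite -[X in _ <= X]ger0_norm // -sqrtr_sqr; apply: ler_wsqrtr.
rewrite sqrrD !sqr_sqrtr ?(ltW q0) //.
have : 0 <= Num.sqrt q * Num.sqrt t *+ 2 by rewrite mulrn_wge0 // mulr_ge0 ?sqrtr_ge0.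
lra.
Qed.

Lemma mul_le_abs {x y p q : R} : `|x| <= p -> `|y| <= q -> x * y <= p * q.
Proof.
move=> hx hy; apply: le_trans (ler_norm _) _; rewrite normrM.
by apply: ler_pM => //.
Qed.

Lemma brk_lip a e b (A B d : R) : `|a| <= A -> `|b| <= B -> `|e| <= d -> d <= 1 ->
  brk (a + e) b <= brk a b + Num.sqrt (n%:R ^+ 2 * B ^+ 2 * (4 * A + 2) * d).
Proof.
move=> ha hb he d1.
have A0 : 0 <= A := le_trans (normr_ge0 _) ha.
have B0 : 0 <= B := le_trans (normr_ge0 _) hb.
have d0 : 0 <= d := le_trans (normr_ge0 _) he.
have n0 : 0 <= (n%:R : R) by [].
apply: sqrt_le_add.
  by rewrite mulr_ge0 // mulr_ge0 // ?mulr_ge0 ?exprn_ge0 //; lra.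
rewrite dotvDD dotvDl.
have h1 : `|dotv a e| <= n%:R * (A * d).
  by apply: le_trans (dotv_bound _ _) _; rewrite ler_wpM2l // ler_pM.
have h2 : `|dotv e e| <= n%:R * (d * d).
  by apply: le_trans (dotv_bound _ _) _; rewrite ler_wpM2l // ler_pM.
have h3 : `|dotv b b| <= n%:R * (B * B).
  by apply: le_trans (dotv_bound _ _) _; rewrite ler_wpM2l // ler_pM.
have h4 : `|- dotv a b| <= n%:R * (A * B).
  by rewrite normrN; apply: le_trans (dotv_bound _ _) _; rewrite ler_wpM2l // ler_pM.
have h5 : `|dotv e b| <= n%:R * (d * B).
  by apply: le_trans (dotv_bound _ _) _; rewrite ler_wpM2l // ler_pM.
have k1 := mul_le_abs h1 h3.
have k2 := mul_le_abs h2 h3.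
have k3 := mul_le_abs h4 h5.
have k4 : 0 <= dotv e b ^+ 2 by rewrite sqr_ge0.
have k5 : 0 <= n%:R ^+ 2 * B ^+ 2 * d * (1 - d) by rewrite !mulr_ge0 ?exprn_ge0 //; lra.
have k6 : 0 <= n%:R ^+ 2 * B ^+ 2 * d by rewrite !mulr_ge0 ?exprn_ge0 //.
nra.
Qed.
End Aux.

Section S2.
Context (R : realType) (n : nat).

Lemma sphere_compact : compact (sphere (R:=R) (n:=n)).
Proof.
apply: bounded_closed_compact.
  exists 1; split; first by rewrite num_real.
  by move=> M M1 u /sphere_norm /le_trans; apply; apply: ltW.
have -> : sphere (R:=R) (n:=n) = (fun u => dotv u u) @^-1` [set x | x = 1].
  by [].
apply: preimage_closed; last exact: closed_eq.
move=> u _; rewrite /dotv.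
apply: (continuous_big (op := +%R)) => //.
  exact: add_continuous.
move=> i _ v; apply: continuousM; exact: coord_continuous.
Qed.

Lemma small_r (C g : R) : 0 <= C -> 0 < g ->
  exists r, [/\ 0 < r, r <= 1 & Num.sqrt (C * r) <= g].
Proof.
move=> C0 g0.
have D0 : 0 < C + 1 + g ^+ 2 by rewrite addr_gt0 ?exprn_gt0 // ltr_wpDl.
exists (g ^+ 2 / (C + 1 + g ^+ 2)); split.
- by rewrite divr_gt0 // exprn_gt0.
- by rewrite ler_pdivrMr // mul1r lerDr; lra.
- rewrite -[X in _ <= X](ger0_norm (ltW g0)) -sqrtr_sqr; apply: ler_wsqrtr.
  rewrite mulrA ler_pdivrMr //.
  have : 0 <= g ^+ 2 by rewrite sqr_ge0.
  nra.
Qed.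
End S2.

Section S3.
Context (R : realType) (n : nat) (K : set 'rV[R]_n).
Hypothesis Kc : compact K.
Implicit Types (a b u y : 'rV[R]_n).

Lemma K_bound : exists M : R, 0 <= M /\ forall y, K y -> `|y| <= M.
Proof.
have [M [Mreal HM]] := compact_bounded Kc.
exists (Num.max 0 M + 1); split; first by rewrite addr_ge0 // le_max lexx.
apply: HM; rewrite ltr_pwDr // ?le_max ?lexx ?orbT //.
Qed.

Lemma brk_bound a b (A B : R) : `|a| <= A -> `|b| <= B ->
  brk a b <= Num.sqrt (n%:R * (A * A) * (n%:R * (B * B))).
Proof.
move=> ha hb; apply: ler_wsqrtr.
have A0 : 0 <= A := le_trans (normr_ge0 _) ha.
have B0 : 0 <= B := le_trans (normr_ge0 _) hb.
have h1 : `|dotv a a| <= n%:R * (A * A).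
  by apply: le_trans (dotv_bound _ _ a a) _; rewrite ler_wpM2l // ler_pM.
have h2 : `|dotv b b| <= n%:R * (B * B).
  by apply: le_trans (dotv_bound _ _ b b) _; rewrite ler_wpM2l // ler_pM.
have := @mul_le_abs R _ _ _ _ h1 h2; have := sqr_ge0 (dotv a b); lra.
Qed.

Lemma cK_ge u y (A : R) : `|u| <= A -> K y -> brk u y <= cyl_supp K u.
Proof.
move=> hu Ky; have [M [M0 HM]] := K_bound.
apply: ub_le_sup; last by exists y.
exists (Num.sqrt (n%:R * (A * A) * (n%:R * (M * M)))) => _ [z Kz <-].
exact: brk_bound hu (HM _ Kz).
Qed.

Lemma cK_le u (r : R) : K !=set0 -> (forall y, K y -> brk u y <= r) -> cyl_supp K u <= r.
Proof.
move=> [y Ky] H; apply: ge_sup; first by exists (brk u y), y.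
by move=> _ [z Kz <-]; apply: H.
Qed.
End S3.

Theorem proposition3p7 (R : realType) (n : nat) (hn : (2 <= n)%N)
    (K : set 'rV[R]_n) (hK : in_Ce K) :
  K = \bigcap_(u in sphere (R:=R) (n:=n)) cylinder u (cyl_supp K u) /\
  (forall x, bdry K x ->
     exists u0, sphere u0 /\ brk x u0 = cyl_supp K u0).
Proof.
case: hK => [[Kc [_ Kint]] [_ [I [hI KI]]]].
have Kne : K !=set0 by case: Kint => x /interior_subset Kx; exists x.
have [M [M0 HM]] := @K_bound _ _ _ Kc.
have inK : forall y, (forall u, sphere u -> brk y u <= cyl_supp K u) -> K y.
  move=> y Hy; rewrite KI => p Ip.
  have [sp p2] := hI p Ip.
  rewrite /cylinder /=; apply: le_trans (Hy _ sp) _.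
  apply: cK_le => // z Kz; rewrite brkC.
  by move: Kz; rewrite KI => /(_ p Ip).
have Kin : forall y u, K y -> sphere u -> brk y u <= cyl_supp K u.
  by move=> y u Ky su; rewrite brkC; exact: (@cK_ge _ _ _ Kc _ _ _ (@sphere_norm _ _ _ su) Ky).
split.
  apply/seteqP; split => y.
    by move=> Ky u su; exact: Kin.
  by move=> Hy; apply: inK => u su; exact: Hy.
move=> x [clx nintx].
have Kx : K x.
  have Kcl : closed K := compact_closed (@norm_hausdorff _ _) Kc.
  by move/closure_id: Kcl => ->.
apply: contrapT => Hno.
have gpos : forall u, sphere u -> brk x u < cyl_supp K u.
  move=> u su; rewrite lt_neqAle Kin // andbT; apply/eqP => e.
  by apply: Hno; exists u.
pose g u := cyl_supp K u - brk x u.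
pose C : R := n%:R ^+ 2 * M ^+ 2 * (4 * 2 + 2).
have C0 : 0 <= C by rewrite !mulr_ge0 ?exprn_ge0.
have cov : sphere (R:=R) (n:=n) `<=` cover [set: nat] (fun k => interior [set v | k.+1%:R^-1 < g v]).
  move=> u su.
  have g0 : 0 < g u by rewrite subr_gt0 gpos.
  have g40 : 0 < g u / 4 by rewrite divr_gt0.
  have [r [r0 r1 hr]] := @small_r _ _ _ C0 g40.
  exists (Num.truncn (2 / g u)) => //.
  rewrite /interior /=; apply/nbhs_ballP; exists r => // v.
  rewrite -ball_normE /= => uv.
  have hu := @sphere_norm _ _ _ su.
  have he : `|v - u| <= r by rewrite distrC ltW.
  have he' : `|- (v - u)| <= r by rewrite normrN.
  have hv : `|v| <= 2.
    have -> : v = u + (v - u) by rewrite addrC subrK.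
    apply: le_trans (ler_normD _ _) _; lra.
  have hu2 : `|u| <= 2 by lra.
  have E1 : cyl_supp K u <= cyl_supp K v + Num.sqrt (C * r).
    apply: cK_le => // y Ky.
    have -> : u = v + (- (v - u)) by rewrite opprB addrC subrK.
    apply: le_trans (@brk_lip _ _ _ _ _ _ _ _ hv (HM y Ky) he' r1) _.
    by rewrite lerD2r; exact: (@cK_ge _ _ _ Kc _ _ _ hv Ky).
  have E2 : brk x v <= brk x u + Num.sqrt (C * r).
    rewrite brkC (brkC _ _ x u).
    have -> : v = u + (v - u) by rewrite addrC subrK.
    exact: (@brk_lip _ _ _ _ _ _ _ _ hu2 (HM x Kx) he r1).
  have hk := Num.Theory.truncnS_gt (2 / g u).
  have hk' : (Num.truncn (2 / g u)).+1%:R^-1 < g u / 2.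
    rewrite invf_plt ?posrE ?divr_gt0 // invf_div //.
  move: hk' hr g0 E1 E2; rewrite /g.
  have [s ->] : exists s : R, Num.sqrt (C * r) = s by eexists.
  have [t ->] : exists t : R, (Num.truncn (2 / (cyl_supp K u - brk x u))).+1%:R^-1 = t by eexists.
  lra.
have Sc := sphere_compact R n; rewrite compact_cover in Sc.
have [D' _ Dcov] := Sc nat setT _ (fun k _ => open_interior _) cov.
pose N := (\max_(k <- finmap.enum_fset D') k)%N.
pose eps : R := N.+1%:R^-1.
have eps0 : 0 < eps by rewrite invr_gt0.
have geps : forall u, sphere u -> eps < g u.
  move=> u su; have [k Dk /interior_subset /= hk] := Dcov u su.
  apply: le_lt_trans hk; rewrite lef_pV2 ?posrE // ler_nat ltnS.
  by apply: (@leq_bigmax_seq _ _ predT id k).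

pose C' : R := n%:R ^+ 2 * 1 ^+ 2 * (4 * M + 2).
have C'0 : 0 <= C' by rewrite !mulr_ge0 ?exprn_ge0 //; lra.
have [d [d0 d1 hd]] := @small_r _ _ _ C'0 eps0.
apply: nintx; rewrite /interior /=; apply/nbhs_ballP; exists d => // y.
rewrite -ball_normE /= => xy.
apply: inK => u su.
have hu := @sphere_norm _ _ _ su.
have he : `|y - x| <= d by rewrite distrC ltW.
have -> : y = x + (y - x) by rewrite addrC subrK.
apply: le_trans (@brk_lip _ _ _ _ _ _ _ _ (HM x Kx) hu he d1) _.
have := geps u su; rewrite /g => h.
move: hd h; have [s ->] : exists s : R, Num.sqrt (C' * d) = s by eexists.
lra.
Qed.
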